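(* Let $q$ be a power of $3$, and pick $a,b,c,d,e\in\mathbb{F}_q$ with $e\ne 0$. Then $\varphi\colon (x,y)\mapsto (x^3-exy^2-ax-by,\, y^3-cx-dy)$ permutes $\mathbb{F}_q\times\mathbb{F}_q$ if and only if $c=0$, $d$ is either zero or a nonsquare in $\mathbb{F}_q$, and one of the following holds: (i) $a=0$ and $e$ is a nonsquare in $\mathbb{F}_q$; or (ii) $q=3$, $a=-1$, and $e=1$. *)

(* Defs.v *)
From HB Require Import structures.
From mathcomp Require Import all_boot all_order all_algebra all_field.
Set Implicit Arguments. Unset Strict Implicit. Unset Printing Implicit Defensive.
Import GRing.Theory.
Local Open Scope ring_scope.

Definition is_square (F : fieldType) (x : F) : Prop := exists y : F, y ^+ 2 = x.

Definition phi_map (F : fieldType) (a b c d e : F) (p : F * F) : F * F :=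
  let: (x, y) := p in
  (x ^+ 3 - e * x * y ^+ 2 - a * x - b * y, y ^+ 3 - c * x - d * y).

(* Main.v *)
Require Import Defs.
From HB Require Import structures.
From mathcomp Require Import all_boot all_order all_algebra all_field.
From mathcomp Require Import ring zify.
Import GRing.Theory.
Local Open Scope ring_scope.

Lemma cubeD (F : fieldType) (h3 : (3%:R : F) = 0) (u v : F) : (u + v) ^+ 3 = u ^+ 3 + v ^+ 3.
Proof. ring: h3. Qed.

Lemma cubeB (F : fieldType) (h3 : (3%:R : F) = 0) (u v : F) : (u - v) ^+ 3 = u ^+ 3 - v ^+ 3.
Proof. rewrite cubeD //; ring. Qed.

Section Sq.
Variable F : finFieldType.

Lemma sq_eq (y w : F) : y ^+ 2 = w ^+ 2 -> y = w \/ y = - w.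
Proof.
move=> h. have : (y - w) * (y + w) = 0 by rewrite -subr_sqr h subrr.
move/eqP; rewrite mulf_eq0 => /orP [h1 | h1].
  by left; apply/eqP; rewrite -subr_eq0.
by right; apply/eqP; rewrite -addr_eq0.
Qed.

Definition sqs : {set F} := [set y ^+ 2 | y : F].

Lemma sqsP x : x \in sqs <-> is_square x.
Proof.
split; first by case/imsetP => y _ ->; exists y.
by case=> y <-; apply: imset_f.
Qed.

Lemma sq_in y : y ^+ 2 \in sqs.
Proof. by apply/sqsP; exists y. Qed.

Lemma zero_sqs : (0 : F) \in sqs.
Proof. by apply/sqsP; exists 0; rewrite expr0n. Qed.

Definition rt (u : F) : F := odflt 0 [pick w | w ^+ 2 == u].

Lemma rtP y : (rt (y ^+ 2)) ^+ 2 = y ^+ 2.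
Proof. rewrite /rt; case: pickP => [w /eqP // | /(_ y)]; by rewrite eqxx. Qed.

Lemma card_sqs : (#|F| < 2 * #|sqs|)%N.
Proof.
pose f (y : F) := (y ^+ 2, y == rt (y ^+ 2)).
have finj : injective f.
  move=> y y' [E B]. rewrite -E in B.
  have [Hy|Hy] := sq_eq _ _ (esym (rtP y)); have [Hy'|Hy'] := sq_eq _ _ (etrans (esym E) (esym (rtP y))).
  - by rewrite Hy Hy'.
  - by move: B; rewrite -Hy eqxx => /esym/eqP ->.
  - by move: B; rewrite -Hy' eqxx => /eqP.
  - by rewrite Hy Hy'.
have sub : f @: [set: F] \subset (setX sqs [set: bool]) :\ (0, false).
  apply/subsetP => p /imsetP [y _ ->]; rewrite !inE /f sq_in /= andbT.
  apply/eqP; case => y0 hb.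
  have yz : y = 0 by apply/eqP; have := expf_eq0 y 2; rewrite y0 eqxx /=.
  move: hb; rewrite yz expr0n /=.
  have := rtP 0; rewrite expr0n /= => /eqP; rewrite expf_eq0 /= => /eqP ->.
  by rewrite eqxx.
have h1 : #|setX sqs [set: bool]| = (1 + #|setX sqs [set: bool] :\ (0%R : F, false)|)%N.
  by rewrite (cardsD1 (0%R : F, false) (setX sqs [set: bool])) !inE zero_sqs.
rewrite cardsX cardsT card_bool in h1.
have := subset_leq_card sub.
rewrite card_imset // cardsT.
by rewrite mulnC h1 add1n ltnS.
Qed.

Definition nsq : {set F} := [set x | ~~ ((x \in sqs) && (x != 0))].

Lemma card_nsq : (#|nsq| + #|sqs| = #|F| + 1)%N.
Proof.
rewrite -cardsUI.
have -> : nsq :|: sqs = setT.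
  by apply/setP => x; rewrite !inE; case: (x \in sqs); rewrite ?orbT.
have -> : nsq :&: sqs = [set 0].
  apply/setP => x; rewrite !inE; case: (eqVneq x 0) => [->|]; rewrite ?zero_sqs //.
  by rewrite andbT; case: (x \in sqs).
by rewrite cardsT cards1.
Qed.

Lemma nsq_img n : n \notin sqs -> [set n * u | u in sqs] = nsq.
Proof.
move=> hn.
have n0 : n != 0 by apply: contra hn => /eqP ->; exact: zero_sqs.
apply/eqP; rewrite eqEcard; apply/andP; split.
  apply/subsetP => p /imsetP [u /imsetP [w _ ->] ->]; rewrite inE.
  apply/negP => /andP [/imsetP [v _ hv] hnz].
  have w0 : w != 0 by apply: contra hnz => /eqP ->; rewrite expr0n mulr0.
  apply: (negP hn); apply/sqsP; exists (v / w).
  by rewrite expr_div_n -hv mulfK // expf_neq0.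
rewrite card_imset; last exact: mulfI.
move: (card_sqs) (card_nsq) => h1 h2.
by rewrite -(leq_add2r #|sqs|) h2 addn1 addnn -mul2n.
Qed.


Lemma two_neq0 (h3 : (3%:R : F) = 0) : (2%:R : F) != 0.
Proof.
apply/negP => /eqP h2. have : (1 : F) = 3%:R - 2%:R by ring.
by rewrite h3 h2 subrr => /eqP; rewrite oner_eq0.
Qed.

Lemma one_neq_m1 (h3 : (3%:R : F) = 0) : (1 : F) != -1.
Proof.
apply/negP => /eqP h. have : (2%:R : F) = 1 - -1 by ring.
by rewrite -h subrr; apply/eqP; exact: two_neq0.
Qed.

Lemma card3_elems (h3 : (3%:R : F) = 0) :
  (forall x : F, x = 0 \/ x = 1 \/ x = -1) <-> #|F| = 3%N.
Proof.
have c3 : #|((0 : F) |: (1 |: [set -1]))| = 3%N.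
  rewrite !cardsU1 cards1 !inE.
  have h01 : (0 : F) != 1 by rewrite eq_sym oner_eq0.
  have h0m : (0 : F) != -1 by rewrite eq_sym oppr_eq0 oner_eq0.
  by rewrite (negbTE h01) (negbTE h0m) (negbTE (one_neq_m1 h3)).
split.
  move=> h; have E : [set: F] = ((0 : F) |: (1 |: [set -1])).
    apply/setP => x; rewrite !inE.
    by case: (h x) => [->|[->|->]]; rewrite eqxx ?orbT.
  by rewrite -cardsT E c3.
move=> hc x.
have : ((0 : F) |: (1 |: [set -1])) = [set: F].
  by apply/eqP; rewrite eqEcard subsetT cardsT hc c3 /=.
move/setP/(_ x); rewrite !inE.
by case/or3P => /eqP ->; [left | right; left | right; right].
Qed.

Definition Qs (x : F) := (x \in sqs) && (x != 0).

Lemma main_ns (h3 : (3%:R : F) = 0) (a e : F) : a != 0 -> e \notin sqs ->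
  (forall y, a + e * y ^+ 2 \in sqs -> a + e * y ^+ 2 = 0) -> False.
Proof.
move=> a0 eN H.
have aN : a \notin sqs.
  apply/negP => aQ; have := H 0; rewrite expr0n mulr0 addr0 => /(_ aQ).
  by move/eqP; rewrite (negbTE a0).
have CE := nsq_img _ eN; have CA := nsq_img _ aN.
have Ctr x : x \in nsq -> a + x \in nsq.
  rewrite -{1}CE => /imsetP [u /imsetP [y _ ->] ->]; rewrite inE.
  case: (boolP (a + e * y ^+ 2 \in sqs)) => h //=.
  by rewrite (H y h) eqxx.
have Qa u : Qs u -> Qs (a + u).
  move=> hu; apply/negPn/negP => h1.
  have h2 : a + u \in nsq by rewrite inE.
  have := Ctr _ (Ctr _ h2).
  have -> : a + (a + (a + u)) = u + 3%:R * a by ring.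
  by rewrite h3 mul0r addr0 inE => /negP; apply.
have Qaw u w : Qs u -> w != 0 -> Qs (u + a * w ^+ 2).
  move=> /andP [/imsetP [v _ ->] v0] w0.
  have w2 : w ^+ 2 != 0 by rewrite expf_neq0.
  have hq : Qs ((v / w) ^+ 2).
    have vv : v != 0 by apply: contraNneq v0 => ->; rewrite expr0n.
    by rewrite /Qs sq_in expf_neq0 // mulf_neq0 // invr_eq0.
  move: (Qa _ hq) => /andP [/imsetP [z _ hz] hz0].
  have e1 : v ^+ 2 + a * w ^+ 2 = (w * z) ^+ 2.
    by rewrite exprMn -hz expr_div_n; field.
  rewrite /Qs e1 sq_in /= -e1.
  have e2 : v ^+ 2 + a * w ^+ 2 = w ^+ 2 * (a + (v / w) ^+ 2) by rewrite expr_div_n; field.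
  by rewrite e2 mulf_neq0.
have sub : [set 1 + x | x in nsq] \subset sqs :\ 0.
  apply/subsetP => p /imsetP [x]; rewrite -CA => /imsetP [u /imsetP [w _ ->] ->] ->.
  rewrite !inE.
  have q1 : Qs 1 by rewrite /Qs oner_eq0 andbT; apply/sqsP; exists 1; rewrite expr1n.
  case: (eqVneq w 0) => [->|w0].
    by rewrite expr0n mulr0 addr0 andbC.
  by have /andP [] := Qaw 1 w q1 w0 => -> ->.
have := subset_leq_card sub.
rewrite card_imset; last exact: addrI.
rewrite -CA card_imset; last by apply: mulfI; apply: contra aN => /eqP ->; exact: zero_sqs.
rewrite (cardsD1 0 sqs) zero_sqs add1n ltnn.
by [].
Qed.

Lemma main_sq (h3 : (3%:R : F) = 0) (a e : F) : a != 0 -> e \in sqs -> e != 0 ->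
  (forall y, a + e * y ^+ 2 \in sqs -> a + e * y ^+ 2 = 0) ->
  [/\ #|F| = 3%N, a = -1 & e = 1].
Proof.
move=> a0 /imsetP [w _ ->] e0 H.
have w0 : w != 0 by apply: contra e0 => /eqP ->; rewrite expr0n.
have key (r : F) : r != 0 -> r ^+ 2 = - a.
  move=> r0; apply/eqP; apply/negPn/negP => hr.
  pose z := r + a / r; pose u := r - a / r.
  have E : a + w ^+ 2 * (u / w) ^+ 2 = z ^+ 2 - 3%:R * a.
    by rewrite /z /u expr_div_n; field; rewrite r0 w0.
  rewrite h3 mul0r subr0 in E.
  have := H (u / w); rewrite E sq_in => /(_ isT) /eqP.
  rewrite expf_eq0 /= /z => /eqP hz.
  apply: (negP hr).
  have : r * (r + a / r) = r ^+ 2 + a by field.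
  by rewrite hz mulr0 => /esym/eqP; rewrite addr_eq0.
have am1 : a = -1 by rewrite -[a]opprK -(key 1 (oner_neq0 _)) expr1n.
have el (x : F) : x = 0 \/ x = 1 \/ x = -1.
  case: (eqVneq x 0) => [->|x0]; first by left.
  have := key x x0; rewrite am1 opprK => h.
  have := sq_eq x 1; rewrite expr1n => /(_ h) [->|->].
    by right; left.
  by right; right.
split => //; first by apply/(card3_elems h3).
by case: (el w) => [w00|[->|->]]; [rewrite w00 eqxx in w0 | rewrite expr1n | rewrite sqrrN expr1n].
Qed.

End Sq.

Theorem theorem1p6 (F : finFieldType) (hchar : 3%N \in [pchar F])
  (a b c d e : F) (he : e != 0) :
  bijective (phi_map a b c d e) <->
  [/\ c = 0, d = 0 \/ ~ is_square d &
      (a = 0 /\ ~ is_square e) \/ (#|F| = 3%N /\ a = -1 /\ e = 1)].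
Proof.
have h3 : (3%:R : F) = 0 := pcharf0 hchar.
split.
- move=> /bij_inj inj.
  have c0 : c = 0.
    apply/eqP; apply/negPn/negP => hc.
    pose t := (1 - d) / c. pose x := (t ^+ 3 - a * t - b) / e - t.
    have hE : phi_map a b c d e (x, 0) = phi_map a b c d e (x + t, 1).
      rewrite /phi_map cubeD //; congr pair.
        by rewrite /x /t; field; rewrite hc he.
      by rewrite /x /t; field; rewrite hc he.
    case: (inj _ _ hE) => _ /eqP; by rewrite eq_sym oner_eq0.
  have hd : d = 0 \/ ~ is_square d.
    case: (eqVneq d 0) => [->|d0]; [by left | right].
    move=> [s hs].
    have s0 : s != 0 by apply: contraNneq d0 => s00; rewrite -hs s00 expr0n.
    pose x := - b / (e * s).
    have hE : phi_map a b c d e (x, 0) = phi_map a b c d e (x, s).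
      rewrite /phi_map c0 -hs; congr pair; last by ring.
      by rewrite /x; field; rewrite s0 he.
    case: (inj _ _ hE) => /eqP; by rewrite eq_sym (negbTE s0).
  have H y : a + e * y ^+ 2 \in sqs F -> a + e * y ^+ 2 = 0.
    move=> /imsetP [t _ ht]. case: (eqVneq t 0) => [t0|t0]; first by rewrite ht t0 expr0n.
    have hE : phi_map a b c d e (0, y) = phi_map a b c d e (t, y).
      rewrite /phi_map c0; congr pair; last by ring.
      have -> : t ^+ 3 = t * t ^+ 2 by ring.
      by rewrite -ht; ring.
    case: (inj _ _ hE) => /eqP; by rewrite eq_sym (negbTE t0).
  split => //.
  case: (eqVneq a 0) => [a00|a0].
    left; split => //. move=> [s hs].
    have := H 1; rewrite a00 expr1n mulr1 add0r => h.
    have : e \in sqs F by apply/sqsP; exists s.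
    by move/h => /eqP; rewrite (negbTE he).
  case: (boolP (e \in sqs F)) => eQ.
    by right; have [? ? ?] := @main_sq F h3 a e a0 eQ he H.
  by exfalso; exact: (@main_ns F h3 a e a0 eQ H).
- move=> [c0 hd hae]. apply: injF_bij. move=> [x y] [x' y']. rewrite /phi_map c0. case=> E1 E2.
  have yy : y = y'.
    apply/eqP; rewrite -subr_eq0; apply/negPn/negP => s0.
    have e3 : (y - y') ^+ 3 - d * (y - y') = (y ^+ 3 - 0 * x - d * y) - (y' ^+ 3 - 0 * x' - d * y').
      by rewrite cubeB //; ring.
    rewrite E2 subrr in e3.
    have hs : (y - y') ^+ 3 = d * (y - y') by apply/eqP; rewrite -subr_eq0 e3.
    have h : (y - y') ^+ 2 = d by apply: (mulfI s0); rewrite -exprS hs mulrC.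
    case: hd => [d0|dn].
      by move: h; rewrite d0 => /eqP; rewrite expf_eq0 /= (negbTE s0).
    by apply: dn; exists (y - y').
  subst y'. congr pair. apply/eqP; rewrite -subr_eq0; apply/negPn/negP => t0.
  have e3 : (x - x') ^+ 3 - (a + e * y ^+ 2) * (x - x') =
    (x ^+ 3 - e * x * y ^+ 2 - a * x - b * y) - (x' ^+ 3 - e * x' * y ^+ 2 - a * x' - b * y).
    by rewrite cubeB //; ring.
  rewrite E1 subrr in e3.
  have ht : (x - x') ^+ 3 = (a + e * y ^+ 2) * (x - x') by apply/eqP; rewrite -subr_eq0 e3.
  have h2 : (x - x') ^+ 2 = a + e * y ^+ 2 by apply: (mulfI t0); rewrite -exprS ht mulrC.
  case: hae => [[a00 en] | [q3 [am1 e1]]].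
    apply: en. rewrite a00 add0r in h2.
    have y0 : y != 0.
      apply: contraNneq t0 => y00; move: h2; rewrite y00 expr0n mulr0 => /eqP.
      by rewrite expf_eq0.
    exists ((x - x') / y). by rewrite expr_div_n h2 mulfK // expf_neq0.
  have el := (@card3_elems F h3).2 q3.
  rewrite am1 e1 mul1r in h2.
  have h1 : (x - x') ^+ 2 = 1.
    case: (el (x - x')) => [h|[h|h]]; first by rewrite h eqxx in t0.
      by rewrite h expr1n.
    by rewrite h sqrrN expr1n.
  have y2 : y ^+ 2 = 0 \/ y ^+ 2 = 1.
    case: (el y) => [->|[->|->]]; [left; exact: expr0n | right; exact: expr1n | right].
    by rewrite sqrrN expr1n.
  rewrite h1 in h2.
  case: y2 => y2; rewrite y2 in h2.
    by move: (@one_neq_m1 F h3); rewrite {1}h2 addr0 eqxx.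
  by move: h2; rewrite addNr => /eqP; rewrite oner_eq0.
Qed.
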